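(* Let $d=2$ and $\boldsymbol{W}=\mathrm{diag}(\lambda_1,\lambda_2)$ with $\lambda_1,\lambda_2>0$, $\lambda_1+\lambda_2=1$. Let $(\boldsymbol{w},\boldsymbol{H})$ be a random pair, where $\boldsymbol{w}=(w_1,w_2)$ is a unit vector in $\mathbb{R}^2$ with $\mathbb{E}[\boldsymbol{w}\boldsymbol{w}^\top]=\boldsymbol{W}$ and $\boldsymbol{H}$ is a random symmetric $2\times2$ matrix with square-integrable entries whose distribution does not depend on any loss matrix. For a symmetric $2\times2$ matrix $\boldsymbol{L}$ put $\ell=\boldsymbol{w}^\top\boldsymbol{L}\boldsymbol{w}$ and $\widetilde{\boldsymbol{L}}=\ell\boldsymbol{H}$. Suppose $\mathbb{E}[\widetilde{\boldsymbol{L}}]=\boldsymbol{L}$ for every symmetric $2\times2$ matrix $\boldsymbol{L}$. Then for every $\alpha>0$ and every symmetric $\boldsymbol{L}$ with $\boldsymbol{L}\succeq\alpha\boldsymbol{I}$, \[ \mathbb{E}\big[\mathrm{tr}(\boldsymbol{W}\widetilde{\boldsymbol{L}}^2)\big]\ge\frac{\alpha^2}{4\min\{\lambda_1,\lambda_2\}}. \] *)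

(* Defs.v *)
From HB Require Import structures.
From mathcomp Require Import all_boot all_order all_algebra.
From mathcomp Require Import all_classical all_reals all_analysis.
Set Implicit Arguments. Unset Strict Implicit. Unset Printing Implicit Defensive.
Import Order.TTheory GRing.Theory Num.Theory.
Local Open Scope ring_scope.

Definition Wdiag (R : ringType) (l1 l2 : R) : 'M[R]_2 :=
  diag_mx (\row_(i < 2) if i == 0 then l1 else l2).

Definition qform (R : ringType) (L : 'M[R]_2) (v : 'cV[R]_2) : R :=
  ((v^T *m L *m v) 0 0).

(* Main.v *)
Require Import Defs.
From HB Require Import structures.
From mathcomp Require Import all_boot all_order all_algebra.
From mathcomp Require Import all_classical all_reals all_analysis.
From mathcomp Require Import ring lra measurable_realfun.
Import Order.TTheory GRing.Theory Num.Theory.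
Local Open Scope ring_scope.

Lemma e0 : (0 : 'I_2) = ord0. Proof. exact/val_inj. Qed.
Lemma e1 : (1 : 'I_2) = lift ord0 ord0. Proof. exact/val_inj. Qed.

Lemma qformE (R : comNzRingType) (L : 'M[R]_2) v : qform L v =
  L 0 0 * v 0 0 ^+ 2 + (L 0 1 + L 1 0) * (v 0 0 * v 1 0) + L 1 1 * v 1 0 ^+ 2.
Proof.
rewrite /qform !mxE !big_ord_recl !big_ord0 /=.
rewrite !mxE !big_ord_recl !big_ord0 /= !mxE /= e0 e1.
ring.
Qed.

Lemma trE (R : comNzRingType) (l1 l2 a : R) (M : 'M[R]_2) :
  \tr (Wdiag l1 l2 *m ((a *: M) *m (a *: M))) =
  a ^+ 2 * (l1 * (M 0 0 ^+ 2 + M 0 1 * M 1 0) + l2 * (M 1 0 * M 0 1 + M 1 1 ^+ 2)).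
Proof.
rewrite /mxtrace /Wdiag !big_ord_recl !big_ord0 /= !mxE !big_ord_recl !big_ord0 /= !mxE.
rewrite !big_ord_recl !big_ord0 /= !mxE /= e0 e1 /=.
ring.
Qed.

Lemma WE (R : comNzRingType) (l1 l2 : R) : Wdiag l1 l2 0 0 = l1 /\ Wdiag l1 l2 1 1 = l2.
Proof. by rewrite /Wdiag !mxE /= !mulr1n. Qed.


Lemma cst_int d (T : measurableType d) (R : realType) (P : probability T R) (c : R) :
  P.-integrable setT (fun x => c%:E).
Proof. exact: (finite_measure_integrable_cst P c measurableT). Qed.

Lemma dom_int d (T : measurableType d) (R : realType) (P : probability T R) (f g : T -> R) :
  measurable_fun setT f -> (forall x, `|f x| <= g x) ->
  P.-integrable setT (fun x => (g x)%:E) -> P.-integrable setT (fun x => (f x)%:E).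
Proof.
move=> mf fg ig; apply: (le_integrable measurableT _ _ ig).
- exact/measurable_EFinP.
- move=> x _ /=; rewrite lee_fin (ger0_norm (le_trans (normr_ge0 _) (fg x))).
  exact: fg.
Qed.

Lemma bnd1 (R : realFieldType) (a b y : R) : a ^+ 2 + b ^+ 2 = 1 -> `|2 * (a * b) * y| <= 1 + y ^+ 2.
Proof.
move=> u.
have h1 := sqr_ge0 (a - b * y); have h2 := sqr_ge0 (a + b * y); have h3 := sqr_ge0 (y * a).
rewrite ler_norml; apply/andP; split; nra.
Qed.

Lemma bnd2 (R : realFieldType) (a b : R) : a ^+ 2 + b ^+ 2 = 1 -> `|(a * b) ^+ 2| <= 1.
Proof.
move=> u; rewrite exprMn ger0_norm; last by rewrite mulr_ge0 ?sqr_ge0.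
have h0 := sqr_ge0 a; have h1 := sqr_ge0 b.
set p := a ^+ 2 in u h0 *; set q := b ^+ 2 in u h1 *; nra.
Qed.

Ltac meas mw mH := repeat first [ apply: measurable_realfun.measurable_funB
  | apply: measurable_realfun.measurable_funD | apply: measurable_realfun.measurable_funM
  | apply: measurable_realfun.measurable_funX | apply: measurable_realfun.measurable_funN
  | exact: measurable_cst | exact: mw | exact: mH ].

Theorem mainTheorem14 (d : measure_display) (T : measurableType d)
  (R : realType) (P : probability T R) (l1 l2 : R)
  (w : T -> 'cV[R]_2) (H : T -> 'M[R]_2) :
  0 < l1 -> 0 < l2 -> l1 + l2 = 1 ->
  (* w is a random unit vector *)
  (forall i, measurable_fun setT (fun x => w x i 0)) ->
  (forall x, \sum_(i < 2) (w x i 0) ^+ 2 = 1) ->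
  (* E[w w^T] = W *)
  (forall i j, (\int[P]_x (w x i 0 * w x j 0)%:E)%E = (Wdiag l1 l2 i j)%:E) ->
  (* H is a random symmetric matrix with square-integrable entries *)
  (forall x, (H x)^T = H x) ->
  (forall i j, measurable_fun setT (fun x => H x i j)) ->
  (forall i j, P.-integrable setT (fun x => ((H x i j) ^+ 2)%:E)) ->
  (* unbiasedness: E[(w^T L w) H] = L for every symmetric L *)
  (forall L : 'M[R]_2, L^T = L -> forall i j,
     (\int[P]_x (qform L (w x) * H x i j)%:E)%E = (L i j)%:E) ->
  forall (alpha : R) (L : 'M[R]_2), 0 < alpha -> L^T = L ->
  (forall v : 'cV[R]_2, alpha * qform 1%:M v <= qform L v) ->
  ((alpha ^+ 2 / (4 * Num.min l1 l2))%:E <=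
     \int[P]_x (\tr (Wdiag l1 l2 *m ((qform L (w x) *: H x) *m (qform L (w x) *: H x))))%:E)%E.
Proof.
move=> l1p l2p l12 mw wunit hW hsym mH hH2 hU alpha L ap Lsym hL.
have unit x : w x 0 0 ^+ 2 + w x 1 0 ^+ 2 = 1.
  by have := wunit x; rewrite !big_ord_recl big_ord0 -e0 -e1 addr0.
have Hs x : H x 1 0 = H x 0 1.
  by have := hsym x; move/matrixP/(_ 0 1); rewrite mxE.
pose L0 : 'M[R]_2 := \matrix_(i, j) (if i == j then 0 else 1).
have L0s : L0^T = L0 by apply/matrixP => i j; rewrite !mxE eq_sym.
have hq x : qform L0 (w x) = 2 * (w x 0 0 * w x 1 0).
  rewrite qformE !mxE /=; ring.
have hf1 : (\int[P]_x (2 * (w x 0 0 * w x 1 0) * H x 0 1)%:E)%E = 1%:E.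
  rewrite -[RHS](_ : (L0 0 1)%:E = 1%:E); last by rewrite mxE.
  rewrite -(hU L0 L0s 0 1); apply: eq_integral => x _; by rewrite hq.
have int1 := @cst_int _ _ _ P 1.
have iy2 := hH2 0 1.
have intZ c (f : T -> R) : P.-integrable setT (fun x => (f x)%:E) ->
    P.-integrable setT (fun x => (c * f x)%:E).
  move=> h; rewrite (_ : (fun x => (c * f x)%:E) = (fun x => c%:E * (f x)%:E))%E.
    exact: integrableZl.
  by apply/funext=> x; rewrite EFinM.
have iy12 : P.-integrable setT (fun x => (1 + H x 0 1 ^+ 2)%:E).
  under eq_fun do rewrite EFinD.
  exact: integrableD.
have if1 : P.-integrable setT (fun x => (2 * (w x 0 0 * w x 1 0) * H x 0 1)%:E).
  apply: (@dom_int _ _ _ P _ (fun x => 1 + H x 0 1 ^+ 2)) => //.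
    meas mw mH.
  move=> x; have u := unit x.
  set a := w x 0 0 in u *; set b := w x 1 0 in u *; set y := H x 0 1.
  have h1 := sqr_ge0 (a - b * y); have h2 := sqr_ge0 (a + b * y); have h3 := sqr_ge0 (y * a).
  rewrite ler_norml; apply/andP; split; nra.
have if2 : P.-integrable setT (fun x => ((w x 0 0 * w x 1 0) ^+ 2)%:E).
  apply: (@dom_int _ _ _ P _ (fun x => 1)) => //.
    meas mw mH.
  move=> x; have u := unit x.
  rewrite exprMn ger0_norm; last by rewrite mulr_ge0 ?sqr_ge0.
  have h0 := sqr_ge0 (w x 0 0); have h1 := sqr_ge0 (w x 1 0).
  set p := w x 0 0 ^+ 2 in u *; set q := w x 1 0 ^+ 2 in u *. nra.
have iww i : P.-integrable setT (fun x => (w x i 0 * w x i 0)%:E).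
  apply: (@dom_int _ _ _ P _ (fun x => 1)) => //.
    meas mw mH.
  move=> x; have u := unit x.
  rewrite -expr2 ger0_norm; last by rewrite sqr_ge0.
  have h0 := sqr_ge0 (w x 0 0); have h1 := sqr_ge0 (w x 1 0).
  have : i = 0 \/ i = 1 by case: i => [[|[|]]] //= ? ; [left|right]; apply/val_inj.
  by case=> ->; lra.
pose m := Num.min l1 l2.
have mp : 0 < m by rewrite lt_min l1p l2p.
have I2le : (\int[P]_x ((w x 0 0 * w x 1 0) ^+ 2)%:E <= m%:E)%E.
  have [h|h] := leP l1 l2.
    rewrite /m (min_l h) -(WE _ l1 l2).1 -hW.
    apply: le_integral => // x _; rewrite lee_fin.
    have u := unit x; rewrite exprMn -expr2.
    have h0 := sqr_ge0 (w x 0 0); have h1 := sqr_ge0 (w x 1 0).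
    set p := w x 0 0 ^+ 2 in u h0 *; set q := w x 1 0 ^+ 2 in u h1 *; nra.
  rewrite /m (min_r (ltW h)) -(WE _ l1 l2).2 -hW.
  apply: le_integral => // x _; rewrite lee_fin.
  have u := unit x; rewrite exprMn -expr2.
  have h0 := sqr_ge0 (w x 0 0); have h1 := sqr_ge0 (w x 1 0).
  set p := w x 0 0 ^+ 2 in u h0 *; set q := w x 1 0 ^+ 2 in u h1 *; nra.
have fin2 := integrable_fin_num measurableT if2.
set r := fine (\int[P]_x ((w x 0 0 * w x 1 0) ^+ 2)%:E)%E.
have e2 : (\int[P]_x ((w x 0 0 * w x 1 0) ^+ 2)%:E)%E = r%:E by rewrite fineK.
have rle : r <= m by rewrite -lee_fin -e2.
pose A := alpha ^+ 2 / (2 * m).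
pose B := alpha ^+ 2 / (4 * m ^+ 2).
pose g x := A * (2 * (w x 0 0 * w x 1 0) * H x 0 1) - B * (w x 0 0 * w x 1 0) ^+ 2.
have ig : (\int[P]_x (g x)%:E = (A - B * r)%:E)%E.
  rewrite /g; under eq_integral do rewrite EFinB.
  rewrite integralB_EFin //; [| exact: intZ | exact: intZ].
  under eq_integral do rewrite EFinM.
  rewrite integralZl // hf1.
  under eq_integral do rewrite EFinM.
  by rewrite integralZl // e2 -!EFinM -EFinB mulr1.
have step1 : ((alpha ^+ 2 / (4 * m))%:E <= \int[P]_x (g x)%:E)%E.
  rewrite ig lee_fin.
  have m0 : m != 0 by rewrite gt_eqF.
  have hA : A = 2 * (alpha ^+ 2 / (4 * m)) by rewrite /A; field.
  have hB : B * m = alpha ^+ 2 / (4 * m) by rewrite /B; field.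
  have B0 : 0 <= B by rewrite /B; apply: divr_ge0; [exact: sqr_ge0 | apply: mulr_ge0 => //; exact: sqr_ge0].
  have := ler_wpM2l B0 rle; lra.
have step2 : (\int[P]_x (g x)%:E <= \int[P]_x (alpha ^+ 2 * H x 0 1 ^+ 2)%:E)%E.
  apply: le_integral => //.
  - apply: (@dom_int _ _ _ P _ (fun x => `|A| * (1 + H x 0 1 ^+ 2) + `|B|)) => //.
    + rewrite /g; meas mw mH.
    + move=> x; rewrite /g /=; apply: le_trans (ler_normB _ _) _; rewrite (normrM A) (normrM B).
      apply: lerD.
        by apply: ler_wpM2l => //; apply: bnd1; exact: unit.
      by rewrite -[leRHS]mulr1; apply: ler_wpM2l => //; apply: bnd2; exact: unit.
    + under eq_fun do rewrite EFinD.
      apply: integrableD => //; [exact: (intZ _ _ iy12) | exact: cst_int].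
  - exact: (intZ _ _ iy2).
  move=> x _; rewrite lee_fin /g.
  have m0 : m != 0 by rewrite gt_eqF.
  set t := w x 0 0 * w x 1 0; set y := H x 0 1.
  have -> : A * (2 * t * y) - B * t ^+ 2 =
     alpha ^+ 2 * (2 * (t / (2 * m)) * y - (t / (2 * m)) ^+ 2).
    by rewrite /A /B; field.
  apply: ler_wpM2l; first exact: sqr_ge0.
  have := sqr_ge0 (y - t / (2 * m)); set u := t / (2 * m); nra.
have step3 : (\int[P]_x (alpha ^+ 2 * H x 0 1 ^+ 2)%:E <= \int[P]_x
     (\tr (Wdiag l1 l2 *m ((qform L (w x) *: H x) *m (qform L (w x) *: H x))))%:E)%E.
  apply: ge0_le_integral => //.
  - by move=> x _; rewrite lee_fin mulr_ge0 ?sqr_ge0.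
  - apply/measurable_EFinP; meas mw mH.
  - apply/measurable_EFinP; under eq_fun do rewrite trE qformE; meas mw mH.
  move=> x _; rewrite lee_fin trE Hs.
  have hl : alpha <= qform L (w x).
    have := hL (w x); rewrite [qform 1%:M _]qformE !mxE /=.
    by rewrite !mul1r addr0 mul0r addr0 unit mulr1.
  set l := qform L (w x); set y := H x 0 1; set h0 := H x 0 0; set h1 := H x 1 1.
  have p0 := mulr_ge0 (ltW l1p) (sqr_ge0 h0).
  have p1 := mulr_ge0 (ltW l2p) (sqr_ge0 h1).
  have s1 : y ^+ 2 <= l1 * (h0 ^+ 2 + y * y) + l2 * (y * y + h1 ^+ 2).
    have -> : y ^+ 2 = (l1 + l2) * y ^+ 2 by rewrite l12 mul1r.
    rewrite -expr2; lra.
  have s2 : alpha ^+ 2 <= l ^+ 2.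
    rewrite !expr2; apply: ler_pM => //; exact: ltW.
  exact: ler_pM (sqr_ge0 _) (sqr_ge0 _) s2 s1.
exact: le_trans step1 (le_trans step2 step3).
Qed.
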